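(* Under the full-support assumption and with $\eta L<\tfrac12$, for every $t\ge1$, \[ \langle\log\hat{\bm\pi}^{(t+1)}-\log{\bm\pi}^*,\eta\bm P\hat{\bm\pi}^{(t)}-\eta\bm P\hat{\bm\pi}^{(t+1)}\rangle\ge-\frac{(e^{2\eta L}-1)(e^{\eta L}+1)}{2\varepsilon}|\mathbb{A}|(\Theta_{t+1}+2e^{-1})\hat K^{(t+1)}. \]
   Context: $\mathbb{A}$ finite, $\Delta(\mathbb{A})$ the simplex, $\bm P$ skew-symmetric, $L=\max_{a,a'}|P_{a,a'}|$. $\mathbb{M}$: Nash equilibria, i.e. ${\bm\pi}\in\Delta(\mathbb{A})$ with $\max_a(\bm P{\bm\pi})_a\le0$. Full-support assumption: every $a$ has some ${\bm\pi}\in\mathbb{M}$ with $\pi_a>0$. $p({\bm\pi})=\arg\min_{{\bm\pi}'\in\mathbb{M}}D_{\mathrm{KL}}({\bm\pi}'\|{\bm\pi})$ for positive ${\bm\pi}$. OMWU with $\eta>0$: $\hat{\bm\pi}^{(1)}$ positive, ${\bm\pi}^{(0)}=\hat{\bm\pi}^{(1)}$, for $t\ge1$ $\pi^{(t)}_a\propto\hat\pi^{(t)}_a e^{\eta(\bm P{\bm\pi}^{(t-1)})_a}$, $\hat\pi^{(t+1)}_a\propto\hat\pi^{(t)}_a e^{\eta(\bm P{\bm\pi}^{(t)})_a}$ (normalized). ${\bm\pi}^*=p(\hat{\bm\pi}^{(1)})$, $\varepsilon=\min_a\pi^*_a$. $\Theta_t=D_{\mathrm{KL}}({\bm\pi}^*\|\hat{\bm\pi}^{(t)})+4\eta^2L^2D_{\mathrm{KL}}(\hat{\bm\pi}^{(t)}\|{\bm\pi}^{(t-1)})$.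 $\hat K^{(t+1)}=\max_a\hat\pi^{(t)}_a|\eta(\bm P{\bm\pi}^{(t)})_a|$. Logarithms are componentwise. *)

(* Defs.v *)
From mathcomp Require Import all_boot all_order all_algebra.
From mathcomp Require Import all_classical all_reals.
From mathcomp Require Import all_analysis.
Set Implicit Arguments. Unset Strict Implicit. Unset Printing Implicit Defensive.
Import Order.TTheory GRing.Theory Num.Theory.
Local Open Scope ring_scope.

Section OMWU.
Variables (R : realType) (A : finType).

Definition matvec (P : A -> A -> R) (v : A -> R) : A -> R :=
  fun a => \sum_(b : A) P a b * v b.

Definition skew_sym (P : A -> A -> R) : Prop := forall a b, P a b = - P b a.

Definition Lmax (P : A -> A -> R) : R :=
  \big[Num.max/0]_(a : A) \big[Num.max/0]_(b : A) `|P a b|.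

Definition in_simplex (p : A -> R) : Prop :=
  (forall a, 0 <= p a) /\ \sum_(a : A) p a = 1.

Definition nash (P : A -> A -> R) (p : A -> R) : Prop :=
  in_simplex p /\ forall a, matvec P p a <= 0.

Definition full_support (P : A -> A -> R) : Prop :=
  forall a, exists p, nash P p /\ 0 < p a.

(* KL divergence, with the convention 0 log 0 = 0 (ln 0 = 0 in mathcomp). *)
Definition KL (p q : A -> R) : R := \sum_(a : A) p a * ln (p a / q a).

Definition is_KL_proj (P : A -> A -> R) (q pistar : A -> R) : Prop :=
  nash P pistar /\ forall p', nash P p' -> KL pistar q <= KL p' q.

Definition normalize (w : A -> R) : A -> R := fun a => w a / \sum_(b : A) w b.

Definition mwu_step (eta : R) (P : A -> A -> R) (base g : A -> R) : A -> R :=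
  normalize (fun a => base a * expR (eta * matvec P g a)).

(* omwu_state n = (pihat^(n+1), pi^(n)) *)
Fixpoint omwu_state (eta : R) (P : A -> A -> R) (pihat1 : A -> R) (n : nat)
  : (A -> R) * (A -> R) :=
  match n with
  | 0%N => (pihat1, pihat1)
  | n'.+1 =>
      let s := omwu_state eta P pihat1 n' in
      let pit := mwu_step eta P s.1 s.2 in
      (mwu_step eta P s.1 pit, pit)
  end.

(* pihat^(t) for t >= 1 *)
Definition pihat (eta : R) P pihat1 (t : nat) : A -> R :=
  (omwu_state eta P pihat1 t.-1).1.
Definition piseq (eta : R) P pihat1 (t : nat) : A -> R :=
  (omwu_state eta P pihat1 t).2.

Definition Theta (eta : R) P pihat1 (pistar : A -> R) (t : nat) : R :=
  KL pistar (pihat eta P pihat1 t)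
  + 4 * eta ^+ 2 * Lmax P ^+ 2 * KL (pihat eta P pihat1 t) (piseq eta P pihat1 t.-1).

Definition Khat_succ (eta : R) P pihat1 (t : nat) : R :=
  \big[Num.max/0]_(a : A)
     (pihat eta P pihat1 t a * `|eta * matvec P (piseq eta P pihat1 t) a|).

(* epsilon = min_a pistar_a (entries of a simplex point are <= 1) *)
Definition min_entry (p : A -> R) : R := \big[Num.min/1]_(a : A) p a.

End OMWU.

(* Main.v *)
Require Import Defs.
From mathcomp Require Import all_boot all_order all_algebra.
From mathcomp Require Import all_classical all_reals.
From mathcomp Require Import all_analysis.
From mathcomp Require Import ring lra.
Import Order.TTheory GRing.Theory Num.Theory.
Local Open Scope ring_scope.

Section H.
Variable R : realType.
Implicit Types x y w : R.

Lemma ln_le_sub1 y : 0 < y -> ln y <= y - 1.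
Proof.
move=> y0; have := @le_ln1Dx R (y - 1); rewrite [1 + _]addrC subrK; apply; lra.
Qed.

Lemma kl_term x w : 0 <= x -> 0 < w -> x - w <= x * (ln x - ln w).
Proof.
move=> x0 w0; have [->|xp] := eqVneq x 0; first by rewrite mul0r; lra.
have xg : 0 < x by rewrite lt_def xp x0.
have h := @ln_le_sub1 _ (divr_gt0 w0 xg).
rewrite ln_div ?posrE // in h.
have h2 : x * (ln w - ln x) <= x * (w / x - 1) by rewrite ler_wpM2l // ltW.
have e : x * (w / x - 1) = w - x by field; rewrite gt_eqF.
rewrite e in h2; nra.
Qed.

Lemma ln_le_div_e y : 0 < y -> ln y <= y * expR (-1).
Proof.
move=> y0; have h := @ln_le_sub1 _ (mulr_gt0 y0 (expR_gt0 (-1))).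
rewrite lnM ?posrE ?expR_gt0 // expRK in h; lra.
Qed.

Lemma exp_bound x g : `|g| <= x -> x * `|expR g - 1| <= (expR x - 1) * `|g|.
Proof.
move=> hg; have x0 : 0 <= x by apply: le_trans hg.
have [g0|g0] := leP 0 g.
- rewrite (ger0_norm g0) ger0_norm; last by rewrite subr_ge0 -expR0 ler_expR.
  rewrite (ger0_norm g0) in hg.
  have h1 : expR g * (1 - g) <= 1.
    have := expR_ge1Dx (- g); rewrite expRN => h.
    have eg := expR_gt0 g.
    have : (1 - g) * expR g <= (expR g)^-1 * expR g by rewrite ler_wpM2r // ltW.
    by rewrite mulVf ?gt_eqF // mulrC.
  have h2 : expR g * (1 + (x - g)) <= expR x.
    have := expR_ge1Dx (x - g); rewrite expRB => h.
    have eg := expR_gt0 g.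
    have : expR g * (1 + (x - g)) <= expR g * (expR x / expR g) by rewrite ler_wpM2l // ltW.
    by rewrite [expR g * (_ / _)]mulrC divfK ?gt_eqF.
  have hxg : 0 <= x - g by lra.
  have t1 := mulr_ge0 hxg ((eqbRL (subr_ge0 _ _) h1)).
  have t2 := mulr_ge0 g0 ((eqbRL (subr_ge0 _ _) h2)).
  nra.
- rewrite ltr0_norm ?ltr0_norm //; last by rewrite subr_lt0 -expR0 ltr_expR.
  rewrite ltr0_norm // in hg.
  have h1 := expR_ge1Dx g.
  have h2 := expR_ge1Dx x.
  nra.
Qed.

End H.
Section H2.
Variables (R : realType) (A : finType).
Implicit Types (F : A -> R) (v w : A -> R) (P : A -> A -> R) (x y qa t : R).

Lemma bigmax_ge F i : F i <= \big[Num.max/0]_a F a.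
Proof. by rewrite (bigD1 i) //= le_max lexx. Qed.

Lemma bigmax_ge0 F : (forall a, 0 <= F a) -> 0 <= \big[Num.max/0]_a F a.
Proof. by move=> h; elim/big_ind: _ => // x y x0 _; rewrite le_max x0. Qed.

Lemma bigmin_le F i : \big[Num.min/1]_a F a <= F i.
Proof. by rewrite (bigD1 i) //= ge_min lexx. Qed.

Lemma bigmin_gt0 F : (forall a, 0 < F a) -> 0 < \big[Num.min/1]_a F a.
Proof. by move=> h; elim/big_ind: _ => // x y x0 y0; rewrite lt_min x0 y0. Qed.

Lemma Lmax_ge P a b : `|P a b| <= Lmax P.
Proof.
apply: le_trans (bigmax_ge (fun b => `|P a b|) b) _.
exact: (bigmax_ge (fun a => \big[Num.max/0]_b `|P a b|) a).
Qed.

Lemma Lmax_ge0 P : 0 <= Lmax P.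
Proof. by apply: bigmax_ge0 => a; apply: bigmax_ge0. Qed.

Lemma matvec_bound P v a : in_simplex v -> `|matvec P v a| <= Lmax P.
Proof.
move=> [v0 v1]; rewrite /matvec.
apply: le_trans (ler_norm_sum _ _ _) _.
apply: (@le_trans _ _ (\sum_b Lmax P * v b)).
  apply: ler_sum => b _; rewrite normrM (ger0_norm (v0 b)).
  by rewrite ler_wpM2r // Lmax_ge.
by rewrite -mulr_sumr v1 mulr1.
Qed.

Definition ps v := (forall a, 0 < v a) /\ \sum_a v a = 1.


Lemma normalize_ps (a0 : A) w : (forall a, 0 < w a) -> ps (normalize w).
Proof.
move=> w0; have S0 : 0 < \sum_a w a.
  rewrite (bigD1 a0) //=; have := w0 a0.
  have : 0 <= \sum_(i | i != a0) w i by apply: sumr_ge0 => i _; exact: ltW.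
  lra.
split; first by move=> a; rewrite /normalize divr_gt0.
by rewrite /normalize -mulr_suml divff // gt_eqF.
Qed.

Lemma mwu_ps (a0 : A) eta P base g : (forall a, 0 < base a) -> ps (mwu_step eta P base g).
Proof. by move=> h; rewrite /mwu_step; apply: (normalize_ps a0) => a; rewrite mulr_gt0 ?expR_gt0. Qed.

Lemma state_ps (a0 : A) eta P p1 n : ps p1 ->
  ps (omwu_state eta P p1 n).1 /\ ps (omwu_state eta P p1 n).2.
Proof.
move=> h; elim: n => [|n [[h1 _] _]] //=.
by split; apply: (mwu_ps a0) => a //; case: (mwu_ps a0 eta P (omwu_state eta P p1 n).2 h1).
Qed.

Lemma ps_simplex v : ps v -> in_simplex v.
Proof. by case=> h1 h2; split=> // a; exact: ltW. Qed.

Lemma gibbs v w : ps v -> ps w -> 0 <= KL v w.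
Proof.
move=> [v0 v1] [w0 w1]; rewrite /KL.
apply: (@le_trans _ _ (\sum_a (v a - w a))).
  by rewrite sumrB v1 w1 subrr.
apply: ler_sum => a _; rewrite ln_div ?posrE //.
by apply: kl_term; [exact: ltW|].
Qed.


Lemma kl_termE x qa : 0 <= x -> 0 < qa -> x * ln (x / qa) = x * (ln x - ln qa).
Proof.
move=> x0 q0; have [->|xn] := eqVneq x 0; first by rewrite !mul0r.
by rewrite ln_div // posrE lt_def xn x0.
Qed.

Lemma conv_term x y qa t : 0 <= x -> 0 <= y -> 0 < qa -> 0 < t -> t < 1 ->
  ((1 - t) * x + t * y) * (ln ((1 - t) * x + t * y) - ln qa)
  <= (1 - t) * (x * (ln x - ln qa)) + t * (y * (ln y - ln qa)).
Proof.
move=> x0 y0 q0 t0 t1.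
have ht : 0 < 1 - t by lra.
have [w0|wn] := eqVneq ((1 - t) * x + t * y) 0.
  have /andP[h1 h2] : ((1 - t) * x == 0) && (t * y == 0).
    by rewrite -paddr_eq0 ?w0 // mulr_ge0 // ltW.
  move: h1 h2; rewrite !mulf_eq0 (gt_eqF ht) (gt_eqF t0) /= => /eqP -> /eqP ->.
  by rewrite !(mulr0, mul0r, addr0, add0r).
have wp : 0 < (1 - t) * x + t * y.
  by rewrite lt_def wn addr_ge0 // mulr_ge0 // ltW.
move: wn wp; set w := (1 - t) * x + t * y => wn wp.
have hx := @kl_term _ _ _ x0 wp; have hy := @kl_term _ _ _ y0 wp.
have h1 := ler_wpM2l (ltW ht) hx; have h2 := ler_wpM2l (ltW t0) hy.
have E : (1 - t) * (x * (ln x - ln qa)) + t * (y * (ln y - ln qa)) =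
  (1 - t) * (x * (ln x - ln w)) + t * (y * (ln y - ln w)) + w * (ln w - ln qa).
  by rewrite /w; ring.
rewrite E.
have E2 : (1 - t) * (x - w) + t * (y - w) = 0 by rewrite /w; ring.
lra.
Qed.

Lemma proj_pos P q p : (forall a, 0 < q a) -> full_support P ->
  is_KL_proj P q p -> forall a, 0 < p a.
Proof.
move=> q0 fs [[[p0 p1] pn] pmin] a0.
have [pa0|pn0] := eqVneq (p a0) 0; last by rewrite lt_def pn0 p0.
have [m [[[m0 m1] mn] ma0]] := fs a0.
pose K0 := KL p q; pose K1 := KL m q; pose c := `|K1 - K0| + 1.
pose mm := m a0.
have c0 : 0 < c by rewrite /c ltr_pwDr.
pose t := expR (- (c / mm)).
have t0 : 0 < t by rewrite expR_gt0.
have t1 : t < 1 by rewrite expR_lt1 oppr_lt0 divr_gt0.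
have lnt : ln t = - (c / mm) by rewrite expRK.
pose r := fun a => (1 - t) * p a + t * m a.
have r0 : forall a, 0 <= r a.
  by move=> a; rewrite addr_ge0 // mulr_ge0 // ?ltW // subr_gt0.
have rn : nash P r.
  split; first split => //.
    by rewrite big_split /= -!mulr_sumr p1 m1 !mulr1 subrK.
  move=> a; rewrite /matvec.
  rewrite (eq_bigr (fun b => (1 - t) * (P a b * p b) + t * (P a b * m b))); last first.
    by move=> b _; rewrite /r; ring.
  rewrite big_split /= -!mulr_sumr.
  have := pn a; have := mn a; rewrite /matvec => h1 h2.
  nra.
have key : forall a, r a * ln (r a / q a) <= (1 - t) * (p a * ln (p a / q a))
    + t * (m a * ln (m a / q a)) + (if a == a0 then t * mm * ln t else 0).
  move=> a; rewrite !kl_termE //.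
  case: eqP => [->|_]; last by rewrite addr0; apply: conv_term.
  rewrite /r pa0 mulr0 add0r mul0r mulr0 add0r lnM ?posrE //.
  by rewrite /mm le_eqVlt; apply/orP; left; apply/eqP; ring.
have := pmin r rn; rewrite -/K0 => hle.
have : KL r q <= (1 - t) * K0 + t * K1 + t * mm * ln t.
  apply: le_trans (ler_sum _ (fun a _ => key a)) _.
  rewrite !big_split /= -!mulr_sumr -big_mkcond big_pred1_eq /=.
  by rewrite /K0 /K1 /KL.
rewrite lnt.
have E : t * mm * - (c / mm) = - (t * c).
  by rewrite /mm; field; rewrite gt_eqF.
rewrite E => h.
have hn : K1 - K0 <= `|K1 - K0| := ler_norm _.
have : t * (K1 - K0 - c) < 0 by rewrite pmulr_rlt0 // /c; lra.
lra.
Qed.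

Lemma term_lam pa qa lam : 0 < pa -> 0 < qa -> 0 < lam ->
  pa * (ln qa - ln pa) <= qa / lam - pa + pa * ln lam.
Proof.
move=> p0 q0 l0.
have h := @ln_le_sub1 _ (qa / (lam * pa)) (divr_gt0 q0 (mulr_gt0 l0 p0)).
rewrite ln_div ?posrE ?mulr_gt0 // lnM ?posrE // in h.
have h2 := ler_wpM2l (ltW p0) h.
have E : pa * (qa / (lam * pa) - 1) = qa / lam - pa.
  by field; rewrite !gt_eqF.
rewrite E in h2; lra.
Qed.

Lemma w_bound (p q : A -> R) eps : ps p -> ps q -> 0 < eps -> (forall a, eps <= p a) ->
  eps * \sum_a `|ln (q a) - ln (p a)| <= KL p q + 2 * expR (-1).
Proof.
move=> [p0 p1] [q0 q1] e0 ep.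
pose d a := ln (q a) - ln (p a).
have s1 : eps * \sum_a `|d a| <= \sum_a p a * `|d a|.
  by rewrite mulr_sumr; apply: ler_sum => a _; rewrite ler_wpM2r.
have s2 : \sum_a p a * `|d a| = KL p q + 2 * \sum_(a | 0 < d a) p a * d a.
  rewrite mulr_sumr (big_mkcond (fun i => 0 < d i)) /KL -big_split /=; apply: eq_bigr => a _.
  rewrite ln_div ?posrE //; case: ifP => hd.
    by rewrite gtr0_norm // /d; ring.
  by rewrite ler0_norm ?leNgt ?hd // /d; ring.
pose pS := \sum_(a | 0 < d a) p a; pose qS := \sum_(a | 0 < d a) q a.
have pS0 : 0 <= pS by apply: sumr_ge0 => a _; exact: ltW.
have qS1 : qS <= 1.
  rewrite -q1 /qS big_mkcond /=; apply: ler_sum => a _.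
  by case: ifP => _ //; exact: ltW.
have qS0 : 0 <= qS by apply: sumr_ge0 => a _; exact: ltW.
have gen : forall lam, 0 < lam -> \sum_(a | 0 < d a) p a * d a <= qS / lam - pS + pS * ln lam.
  move=> lam l0.
  apply: (@le_trans _ _ (\sum_(a | 0 < d a) (q a / lam - p a + p a * ln lam))).
    by apply: ler_sum => a _; exact: term_lam.
  rewrite /qS /pS !big_split /= sumrN mulr_suml mulr_suml.
  by rewrite lexx.
have T : \sum_(a | 0 < d a) p a * d a <= expR (-1).
  have [pz|pnz] := eqVneq pS 0.
    have := gen _ (expR_gt0 1); rewrite pz mul0r subr0 addr0 => h.
    apply: le_trans h _; rewrite -expRN ler_piMl ?expR_ge0 //.
  have pSp : 0 < pS by rewrite lt_def pnz pS0.
  have := gen _ (eqbRL (invr_gt0 pS) pSp); rewrite invrK => h.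
  apply: le_trans h _.
  have h1 := @ln_le_div_e _ _ (eqbRL (invr_gt0 pS) pSp).
  have h2 := ler_wpM2l pS0 h1.
  rewrite mulrA mulfV ?mul1r // in h2.
  have h3 : qS * pS <= pS by rewrite ler_piMl.
  lra.
rewrite s2 in s1; lra.
Qed.

Lemma D_bound (ph g : A -> R) x : ps ph -> 0 <= x -> (forall a, `|g a| <= x) ->
  x * \sum_a `|ph a - ph a * expR (g a) / \sum_b ph b * expR (g b)|
  <= 2 * expR x * (expR x - 1) * \sum_a ph a * `|g a|.
Proof.
move=> [ph0 ph1] x0 hg.
set Z := \sum_b ph b * expR (g b).
have Zge : expR (-x) <= Z.
  rewrite -[expR (-x)]mul1r -ph1 mulr_suml /Z; apply: ler_sum => a _.
  apply: ler_wpM2l; first exact: ltW. rewrite ler_expR.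
  by have := hg a; rewrite ler_norml => /andP[].
have Z0 : 0 < Z by apply: lt_le_trans Zge; exact: expR_gt0.
have ZE : 1 <= Z * expR x.
  have : expR (-x) * expR x <= Z * expR x by rewrite ler_wpM2r ?expR_ge0.
  by rewrite -expRD addNr expR0.
set S := \sum_b ph b * `|expR (g b) - 1|.
have S0 : 0 <= S by apply: sumr_ge0 => b _; rewrite mulr_ge0 // ltW.
have Z1 : `|Z - 1| <= S.
  have E : \sum_b ph b * (expR (g b) - 1) = Z - \sum_b ph b.
    by rewrite /Z -sumrB; apply: eq_bigr => b _; ring.
  rewrite ph1 in E; rewrite -E.
  apply: le_trans (ler_norm_sum _ _ _) _; apply: ler_sum => b _.
  by rewrite normrM ger0_norm // ltW.
have ZD : Z * \sum_a `|ph a - ph a * expR (g a) / Z| <= 2 * S.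
  rewrite mulr_sumr.
  apply: (@le_trans _ _ (\sum_a (ph a * `|expR (g a) - 1| + ph a * S))); last first.
    by rewrite big_split /= -mulr_suml ph1 mul1r /S; lra.
  apply: ler_sum => a _.
  have E : Z * `|ph a - ph a * expR (g a) / Z| = ph a * `|(Z - 1) - (expR (g a) - 1)|.
    have nZ : `|Z| = Z := ger0_norm (ltW Z0).
    have nP : `|ph a| = ph a := ger0_norm (ltW (ph0 a)).
    have E' : Z * (ph a - ph a * expR (g a) / Z) = ph a * ((Z - 1) - (expR (g a) - 1)).
      by field; rewrite gt_eqF.
    apply: (@eq_trans _ _ (`|Z * (ph a - ph a * expR (g a) / Z)|)).
      by rewrite normrM nZ.
    by rewrite E' normrM nP.
  rewrite E -mulrDr; apply: ler_wpM2l; first exact: ltW.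
  apply: le_trans (ler_normB _ _) _; lra.
have XS : x * S <= (expR x - 1) * \sum_a ph a * `|g a|.
  rewrite /S !mulr_sumr; apply: ler_sum => a _.
  rewrite mulrCA [(expR x - 1) * _]mulrCA; apply: ler_wpM2l; first exact: ltW.
  exact: exp_bound.
set D := \sum_a _.
have D0 : 0 <= D by apply: sumr_ge0 => a _.
have h1 : x * D <= x * D * (Z * expR x) by rewrite ler_peMr // mulr_ge0.
have h3 : x * (Z * D) <= x * (2 * S) by rewrite ler_wpM2l.
have h4 := ler_wpM2l (expR_ge0 x) h3.
have h5 := ler_wpM2l (mulr_ge0 (ler0n _ 2) (expR_ge0 x)) XS.
have E : x * D * (Z * expR x) = expR x * (x * (Z * D)) by ring.
lra.
Qed.

End H2.
Arguments ps {R A}.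

Theorem mainTheorem18 (R : realType) (A : finType) (P : A -> A -> R)
  (eta : R) (pihat1 pistar : A -> R) :
  skew_sym P ->
  full_support P ->
  0 < eta ->
  eta * Lmax P < 1 / 2 ->
  in_simplex pihat1 -> (forall a, 0 < pihat1 a) ->
  is_KL_proj P pihat1 pistar ->
  forall t : nat, (1 <= t)%N ->
  \sum_(a : A)
     (ln (pihat eta P pihat1 t.+1 a) - ln (pistar a)) *
     (eta * matvec P (pihat eta P pihat1 t) a
      - eta * matvec P (pihat eta P pihat1 t.+1) a)
  >= - ((expR (2 * eta * Lmax P) - 1) * (expR (eta * Lmax P) + 1)
         / (2 * min_entry pistar))
     * #|A|%:R
     * (Theta eta P pihat1 pistar t.+1 + 2 * expR (-1))
     * Khat_succ eta P pihat1 t.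
Proof.
move=> _ fs eta0 _ s1 pos1 proj [//|s] _.
have [a0 _|h0] := pickP (fun _ : A => true); last first.
  exfalso; case: s1 => _; rewrite big_pred0 // => /eqP; by rewrite eq_sym oner_eq0.
have ps1 : ps pihat1 by case: s1.
have [[ph0 _] _] := @state_ps R A a0 eta P pihat1 s ps1.
have [[ph'0 ph'1] [pi0 pi1]] := @state_ps R A a0 eta P pihat1 s.+1 ps1.
set ph := pihat eta P pihat1 s.+1.
set ph' := pihat eta P pihat1 s.+2.
set pi := piseq eta P pihat1 s.+1.
have ps_ph : ps ph by have [] := @state_ps R A a0 eta P pihat1 s ps1.
have ps_ph' : ps ph' by [].
have ps_pi : ps pi by [].
pose g a := eta * matvec P pi a.
have eph' : ph' = fun a => ph a * expR (g a) / \sum_b ph b * expR (g b) by [].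
pose L := Lmax P; pose x := eta * L.
have L0 : 0 <= L := @Lmax_ge0 R A P.
have x0 : 0 <= x by rewrite mulr_ge0 // ltW.
have hg : forall a, `|g a| <= x.
  move=> a; rewrite /g normrM (gtr0_norm eta0) /x; apply: ler_wpM2l; first exact: ltW.
  exact: matvec_bound (@ps_simplex R A pi ps_pi).
have pst0 := @proj_pos R A P pihat1 pistar pos1 fs proj.
have ps_st : ps pistar by case: proj => [[[_ h] _] _]; split.
pose eps := min_entry pistar.
have eps0 : 0 < eps by apply: bigmin_gt0.
have epsle : forall a, eps <= pistar a by move=> a; apply: bigmin_le.
pose D := \sum_b `|ph b - ph' b|.
have hv : forall a, `|eta * matvec P ph a - eta * matvec P ph' a| <= x * D.
  move=> a; rewrite -mulrBr normrM (gtr0_norm eta0) /x -mulrA; apply: ler_wpM2l; first exact: ltW.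
  rewrite /matvec -sumrB.
  apply: le_trans (ler_norm_sum _ _ _) _.
  rewrite /D mulr_sumr; apply: ler_sum => b _.
  by rewrite -mulrBr normrM; apply: ler_wpM2r => //; apply: Lmax_ge.
pose W := \sum_a `|ln (ph' a) - ln (pistar a)|.
have hW := @w_bound R A pistar ph' eps ps_st ps_ph' eps0 epsle.
have hD : x * D <= 2 * expR x * (expR x - 1) * \sum_a ph a * `|g a|.
  by rewrite /D eph'; apply: D_bound.
pose K := Khat_succ eta P pihat1 s.+1.
have K0 : 0 <= K.
  rewrite /K /Khat_succ; apply: bigmax_ge0 => a; rewrite mulr_ge0 // ltW //.
  exact: ps_ph.1 a.
have hG : \sum_a ph a * `|g a| <= #|A|%:R * K.
  apply: (@le_trans _ _ (\sum_(a : A) K)); first by apply: ler_sum => a _; rewrite /K /Khat_succ; apply: (@bigmax_ge R A (fun a => ph a * `|g a|) a).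
  by rewrite sumr_const mulr_natl.
have hTh : KL pistar ph' <= Theta eta P pihat1 pistar s.+2.
  rewrite /Theta /=.
  have := @gibbs R A ph' pi ps_ph' ps_pi.
  rewrite -/ph' -/pi => hk.
  by rewrite lerDl mulr_ge0 // mulr_ge0 // ?mulr_ge0 // ?exprn_ge0 // ltW.
set Th := Theta eta P pihat1 pistar s.+2.
rewrite -/K.
set LHS := \sum_a _.
have l1 : - (W * (x * D)) <= LHS.
  rewrite /W mulr_suml -sumrN /LHS; apply: ler_sum => a _.
  have : `|(ln (ph' a) - ln (pistar a)) * (eta * matvec P ph a - eta * matvec P ph' a)|
      <= `|ln (ph' a) - ln (pistar a)| * (x * D).
    by rewrite normrM; apply: ler_wpM2l => //; apply: hv.
  by rewrite ler_norml => /andP[].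
have ex1 : 1 <= expR x by rewrite -expR0 ler_expR.
have ex2 : expR (2 * eta * Lmax P) = expR x * expR x.
  by rewrite -expRD /x /L -mulrA -mulr2n mulr_natl.
rewrite ex2 -/L -/x.
set c := (expR x * expR x - 1) * (expR x + 1).
have h3 : 2 * expR x * (expR x - 1) <= c / 2.
  rewrite /c; have u1 : 0 <= expR x - 1 by lra.
  have := mulr_ge0 u1 (mulr_ge0 u1 u1); nra.
have c0 : 0 <= 2 * expR x * (expR x - 1) by rewrite mulr_ge0 // ?mulr_ge0 // ?expR_ge0; lra.
have hxD : x * D <= c / 2 * (#|A|%:R * K).
  apply: le_trans hD _.
  apply: le_trans (ler_wpM2l c0 hG) _.
  by rewrite ler_wpM2r // mulr_ge0.
have W0 : 0 <= W by apply: sumr_ge0.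
have D0 : 0 <= D by apply: sumr_ge0.
have hW' : W <= (Th + 2 * expR (-1)) / eps.
  have hW2 : eps * W <= KL pistar ph' + 2 * expR (-1) := hW.
  have hTh2 : KL pistar ph' <= Th := hTh.
  rewrite ler_pdivlMr // [W * _]mulrC; lra.
have l2 : W * (x * D) <= (Th + 2 * expR (-1)) / eps * (c / 2 * (#|A|%:R * K)).
  by apply: ler_pM => //; rewrite mulr_ge0.
have E : (Th + 2 * expR (-1)) / eps * (c / 2 * (#|A|%:R * K)) =
   c / (2 * eps) * #|A|%:R * (Th + 2 * expR (-1)) * K.
  by field; rewrite gt_eqF.
rewrite E in l2.
rewrite -/eps; lra.
Qed.
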